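(* The string rewriting system $L$ over the alphabet $\{i,0_2,0_3,\lhd,\rhd\}$ with the seven rules $0_2\rhd\to\rhd$, $0_2 i\rhd\to 0_3 i i\rhd$, $0_2 ii\to i0_2$, $i0_3\to 0_3 iii$, $0_20_3\to 0_30_2$, $\lhd i\to\lhd 0_2$, $\lhd 0_3\to \lhd 0_2 i$ is terminating if and only if for every $n\in\mathbb{N}^+$ the trajectory $n,\tau(n),\tau^2(n),\dots$ contains $1$, where $\tau(n)=n/2$ for even $n$ and $\tau(n)=(3n+1)/2$ for odd $n$ (equivalently, iff the Collatz conjecture holds).
   Context: An SRS induces the rewrite relation $u\ell v\to urv$ for each rule $\ell\to r$; it is terminating if no infinite rewrite sequence exists. (Intended reading: $i(x)=x+1$, $0_2(x)=2x$, $0_3(x)=3x$, $\lhd(x)=1$, $\rhd(x)=x$, a string $\lhd d_1\cdots d_k\rhd$ representing $d_k(\cdots d_1(1))$.) *)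

(* Defs.v *)
From Stdlib Require Import List Arith PeanoNat.
Import ListNotations.

Inductive sym : Type := Si | S02 | S03 | Sl | Sr.

Definition srs := list (list sym * list sym).

Definition rewrite_step (R : srs) (s t : list sym) : Prop :=
  exists (u v l r : list sym), In (l, r) R /\ s = u ++ l ++ v /\ t = u ++ r ++ v.

Definition terminating (R : srs) : Prop :=
  ~ exists f : nat -> list sym, forall k, rewrite_step R (f k) (f (S k)).

Definition L_srs : srs :=
  [ ([S02; Sr], [Sr]);
    ([S02; Si; Sr], [S03; Si; Si; Sr]);
    ([S02; Si; Si], [Si; S02]);
    ([Si; S03], [S03; Si; Si; Si]);
    ([S02; S03], [S03; S02]);
    ([Sl; Si], [Sl; S02]);
    ([Sl; S03], [Sl; S02; Si]) ].

Definition tau (n : nat) : nat :=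
  if Nat.even n then n / 2 else (3 * n + 1) / 2.

Definition collatz_conjecture : Prop :=
  forall n : nat, 1 <= n -> exists k : nat, Nat.iter k tau n = 1.

(* Main.v *)
Require Import Defs.
From Stdlib Require Import List Arith PeanoNat Lia Wf_nat.
From Stdlib Require Import Classical IndefiniteDescription.
Import ListNotations.

Lemma step_cons (R : srs) a s t : rewrite_step R s t -> rewrite_step R (a :: s) (a :: t).
Proof.
  intros (u & v & l & r & H1 & H2 & H3). exists (a :: u), v, l, r.
  subst. simpl. auto.
Qed.

Lemma step_rule (R : srs) l r v : In (l, r) R -> rewrite_step R (l ++ v) (r ++ v).
Proof. intros H. exists [], v, l, r. simpl. auto. Qed.

Lemma tau_even x : tau (2 * x) = x.
Proof.
  unfold tau. replace (2 * x) with (0 + 2 * x) by lia.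
  rewrite Nat.even_add_mul_2. change (Nat.even 0) with true. cbv iota.
  replace (0 + 2 * x) with (x * 2) by lia. apply Nat.div_mul. lia.
Qed.

Lemma tau_odd x : tau (2 * x + 1) = 3 * x + 2.
Proof.
  unfold tau. replace (2 * x + 1) with (1 + 2 * x) by lia.
  rewrite Nat.even_add_mul_2. change (Nat.even 1) with false. cbv iota.
  replace (3 * (1 + 2 * x) + 1) with ((3 * x + 2) * 2) by lia. apply Nat.div_mul. lia.
Qed.

Lemma iter_S_r k x : Nat.iter (S k) tau x = Nat.iter k tau (tau x).
Proof.
  induction k; simpl; auto.
Qed.

Lemma potential : collatz_conjecture ->
  exists p : nat -> nat, forall m, 2 <= m -> p (tau m) < p m.
Proof.
  intros H.
  set (Q := fun m k => m <= 1 \/ Nat.iter k tau m = 1).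
  assert (Hl : forall m, exists k, Q m k /\ forall j, Q m j -> k <= j).
  { intros m.
    assert (Hex : exists k, Q m k).
    { destruct (le_lt_dec m 1) as [h|h].
      - exists 0. left. auto.
      - destruct (H m) as [k Hk]; [lia|]. exists k. right. auto. }
    destruct (dec_inh_nat_subset_has_unique_least_element (Q m)) as [k [Hk _]].
    + intros n. apply classic.
    + exact Hex.
    + exists k. exact Hk. }
  exists (fun m => proj1_sig (constructive_indefinite_description _ (Hl m))).
  intros m Hm.
  destruct (constructive_indefinite_description _ (Hl m)) as [k [Hk1 Hk2]]. simpl.
  destruct (constructive_indefinite_description _ (Hl (tau m))) as [k' [Hk1' Hk2']]. simpl.
  destruct Hk1 as [Hk1|Hk1]; [lia|].
  destruct k as [|k]; [simpl in Hk1; lia|].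
  rewrite iter_S_r in Hk1.
  assert (k' <= k); [apply Hk2'; right; exact Hk1|lia].
Qed.

Inductive mode := NoL (c : nat) | Val (w : nat).

Definition beta (p : nat -> nat) (m : mode) : nat :=
  match m with NoL c => c | Val w => p (S w) end.

Fixpoint run (p : nat -> nat) (a : nat) (m : mode) (s : list sym) : nat * mode :=
  match s with
  | [] => (a, m)
  | x :: s' =>
    match x with
    | Si => run p a (match m with NoL c => NoL c | Val w => Val (S w) end) s'
    | S02 => run p a (match m with NoL c => NoL (S c) | Val w => Val (2 * w + 1) end) s'
    | S03 => run p a (match m with NoL c => NoL c | Val w => Val (3 * w + 2) end) s'
    | Sl => run p a (Val 0) s'
    | Sr => run p (a + beta p m) (NoL 0) s'
    end
  end.

Lemma run_app p a m s1 s2 :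
  run p a m (s1 ++ s2) = let (a', m') := run p a m s1 in run p a' m' s2.
Proof.
  revert a m. induction s1 as [|x s1 IH]; intros a m; simpl; auto.
  destruct x; apply IH.
Qed.

Lemma run_acc p s : forall a m,
  run p a m s = (a + fst (run p 0 m s), snd (run p 0 m s)).
Proof.
  induction s as [|x s IH]; intros a m; simpl; [f_equal; lia|].
  destruct x; rewrite IH; try (symmetry; rewrite IH; simpl; f_equal; lia).
Qed.

Fixpoint runM (x : nat) (s : list sym) : nat :=
  match s with
  | [] => x
  | a :: s' =>
    runM (match a with Si => x + 2 | S02 => x + 1 | S03 => 4 * x
                  | Sl => x + 2 | Sr => x + 1 end) s'
  end.

Lemma runM_app x s1 s2 : runM x (s1 ++ s2) = runM (runM x s1) s2.
Proof. revert x; induction s1; intros; simpl; auto. Qed.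

Lemma runM_mono s : forall x y, x < y -> runM x s < runM y s.
Proof.
  induction s as [|a s IH]; intros x y H; simpl; auto.
  apply IH. destruct a; lia.
Qed.

Section Dir1.
Variable p : nat -> nat.
Hypothesis Hp : forall m, 2 <= m -> p (tau m) < p m.

Lemma rules_ok l r : In (l, r) L_srs ->
  ((forall a m, run p a m l = run p a m r) /\ (forall x, runM x r < runM x l))
  \/ (forall a m, snd (run p a m l) = snd (run p a m r) /\
                  fst (run p a m r) < fst (run p a m l)).
Proof.
  intros H0. simpl in H0.
  destruct H0 as [E|[E|[E|[E|[E|[E|[E|E]]]]]]]; try contradiction;
    inversion E; subst; clear E.
  - right. intros a [c|w]; simpl; split; auto; try lia.
    replace (S (w + (w + 0) + 1)) with (2 * S w) by lia.
    pose proof (Hp (2 * S w)) as h. rewrite tau_even in h. lia.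
  - right. intros a [c|w]; simpl; split; auto; try lia.
    replace (S (S (w + (w + 0) + 1))) with (2 * S w + 1) by lia.
    replace (S (S (S (w + (w + (w + 0)) + 2)))) with (3 * S w + 2) by lia.
    pose proof (Hp (2 * S w + 1)) as h. rewrite tau_odd in h. lia.
  - left. split; [intros a [c|w]; simpl; auto; do 2 f_equal; lia|intros; simpl; lia].
  - left. split; [intros a [c|w]; simpl; auto; do 2 f_equal; lia|intros; simpl; lia].
  - left. split; [intros a [c|w]; simpl; auto; do 2 f_equal; lia|intros; simpl; lia].
  - left. split; [intros a [c|w]; simpl; auto|intros; simpl; lia].
  - left. split; [intros a [c|w]; simpl; auto|intros; simpl; lia].
Qed.

Definition Phi s := fst (run p 0 (NoL 0) s).
Definition Mm s := runM 0 s.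

Lemma step_dec s t : rewrite_step L_srs s t ->
  Phi t < Phi s \/ (Phi t = Phi s /\ Mm t < Mm s).
Proof.
  intros (u & v & l & r & Hin & -> & ->).
  unfold Phi, Mm. rewrite !run_app, !runM_app.
  destruct (run p 0 (NoL 0) u) as [a1 m1].
  destruct (rules_ok l r Hin) as [[H1 H2]|H1].
  - right. split.
    + rewrite ?run_app, H1. destruct (run p a1 m1 r). reflexivity.
    + apply runM_mono. apply H2.
  - left. rewrite ?run_app. destruct (H1 a1 m1) as [h1 h2].
    destruct (run p a1 m1 l) as [a2 m2]. destruct (run p a1 m1 r) as [a3 m3].
    simpl in *. subst. rewrite (run_acc p v a2), (run_acc p v a3). simpl. lia.
Qed.
End Dir1.

Lemma lex_no_inf (F M : nat -> nat) :
  (forall k, F (S k) < F k \/ (F (S k) = F k /\ M (S k) < M k)) -> False.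
Proof.
  intros H.
  assert (forall a b k, F k = a -> M k = b -> False).
  { intro a. induction a as [a IHa] using (well_founded_induction lt_wf).
    intro b. induction b as [b IHb] using (well_founded_induction lt_wf).
    intros k Ha Hb. destruct (H k) as [H1|[H1 H2]].
    - apply (IHa (F (S k))) with (b := M (S k)) (k := S k); auto; lia.
    - apply (IHb (M (S k))) with (k := S k); auto; lia. }
  apply (H0 (F 0) (M 0) 0); reflexivity.
Qed.

Lemma dir1 : collatz_conjecture -> terminating L_srs.
Proof.
  intros H [f Hf]. destruct (potential H) as [p Hp].
  apply (lex_no_inf (fun k => Phi p (f k)) (fun k => Mm (f k))).
  intros k. apply (step_dec p Hp). apply Hf.
Qed.

Definition digit (a : sym) : Prop :=
  match a with Si | S02 | S03 => True | _ => False end.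
Definition digits := Forall digit.

Fixpoint val (v : nat) (w : list sym) : nat :=
  match w with
  | [] => v
  | a :: w' => val (match a with Si => S v | S02 => 2 * v | S03 => 3 * v | _ => v end) w'
  end.

Definition vrel w' w := (forall v, val v w' = val v w) \/ (forall v, val v w' = tau (val v w)).

Lemma L0 n : forall rest, length rest <= n -> digits rest ->
  exists w', digits w' /\ rewrite_step L_srs (S02 :: rest ++ [Sr]) (w' ++ [Sr])
             /\ vrel w' (S02 :: rest).
Proof.
  induction n as [n IH] using (well_founded_induction lt_wf).
  intros rest Hlen Hd.
  destruct rest as [|a rest].
  { exists []. split; [constructor|]. split.
    - apply (step_rule _ [S02; Sr] [Sr] []). simpl; auto.
    - right. intros v. cbn [val]. symmetry. apply tau_even. }
  inversion Hd as [|? ? Ha Hd']; subst.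
  destruct a; simpl in Ha; try contradiction.
  - destruct rest as [|b rest].
    + exists [S03; Si; Si]. split; [repeat constructor|]. split.
      * apply (step_rule _ [S02; Si; Sr] [S03; Si; Si; Sr] []). simpl; auto 10.
      * right. intros v. cbn [val]. replace (S (2 * v)) with (2 * v + 1) by lia.
        rewrite tau_odd. lia.
    + inversion Hd' as [|? ? Hb Hd'']; subst.
      destruct b; simpl in Hb; try contradiction.
      * exists (Si :: S02 :: rest). split; [repeat constructor; auto|]. split.
        -- apply (step_rule _ [S02; Si; Si] [Si; S02] (rest ++ [Sr])). simpl; auto 10.
        -- left. intros v. cbn [val]. f_equal. lia.
      * destruct (IH (length rest) ltac:(simpl in *; lia) rest (le_n _) Hd'')
          as (w'' & H1 & H2 & H3).
        exists (S02 :: Si :: w''). split; [repeat constructor; auto|]. split.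
        -- simpl. do 2 apply step_cons. exact H2.
        -- destruct H3 as [H3|H3]; [left|right]; intros v; cbn [val]; apply H3.
      * exists (S02 :: S03 :: Si :: Si :: Si :: rest).
        split; [repeat constructor; auto|]. split.
        -- simpl. apply step_cons.
           apply (step_rule _ [Si; S03] [S03; Si; Si; Si] (rest ++ [Sr])). simpl; auto 10.
        -- left. intros v. cbn [val]. f_equal. lia.
  - destruct (IH (length rest) ltac:(simpl in *; lia) rest (le_n _) Hd')
      as (w'' & H1 & H2 & H3).
    exists (S02 :: w''). split; [repeat constructor; auto|]. split.
    + simpl. apply step_cons. exact H2.
    + destruct H3 as [H3|H3]; [left|right]; intros v; cbn [val]; apply H3.
  - exists (S03 :: S02 :: rest). split; [repeat constructor; auto|]. split.
    + apply (step_rule _ [S02; S03] [S03; S02] (rest ++ [Sr])). simpl; auto 10.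
    + left. intros v. cbn [val]. f_equal. lia.
Qed.

Lemma redex w : digits w -> w <> [] ->
  exists w', digits w' /\ rewrite_step L_srs (Sl :: w ++ [Sr]) (Sl :: w' ++ [Sr])
             /\ (val 1 w' = val 1 w \/ val 1 w' = tau (val 1 w)).
Proof.
  intros Hd Hne. destruct w as [|a r]; [congruence|].
  inversion Hd as [|? ? Ha Hd']; subst.
  destruct a; simpl in Ha; try contradiction.
  - exists (S02 :: r). split; [constructor; simpl; auto|]. split.
    + apply (step_rule _ [Sl; Si] [Sl; S02] (r ++ [Sr])). simpl; auto 10.
    + left. reflexivity.
  - destruct (L0 (length r) r) as (w' & H1 & H2 & H3); auto.
    exists w'. split; auto. split.
    + apply step_cons. exact H2.
    + destruct H3 as [H3|H3]; [left|right]; apply H3.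
  - exists (S02 :: Si :: r). split; [repeat constructor; simpl; auto|]. split.
    + apply (step_rule _ [Sl; S03] [Sl; S02; Si] (r ++ [Sr])). simpl; auto 10.
    + left. reflexivity.
Qed.

Lemma val_repeat m : forall v, val v (repeat Si m) = v + m.
Proof. induction m; intros v; simpl; [lia|]. rewrite IHm. lia. Qed.

Lemma dir2 : terminating L_srs -> collatz_conjecture.
Proof.
  intros T. apply NNPP. intros Hnc.
  assert (Hn : exists n, 1 <= n /\ forall k, Nat.iter k tau n <> 1).
  { apply NNPP. intros Hc. apply Hnc. intros n Hn. apply NNPP. intros Hk.
    apply Hc. exists n. split; auto. intros k Hk'. apply Hk. exists k. auto. }
  destruct Hn as [n [Hn1 Hn2]].
  set (P := fun s => exists w k, digits w /\ s = Sl :: w ++ [Sr] /\ val 1 w = Nat.iter k tau n).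
  assert (Hnext : forall s, P s -> exists t, rewrite_step L_srs s t /\ P t).
  { intros s (w & k & Hd & -> & Hv).
    assert (w <> []). { intros ->. simpl in Hv. apply (Hn2 k). auto. }
    destruct (redex w Hd H) as (w' & H1 & H2 & H3).
    exists (Sl :: w' ++ [Sr]). split; auto.
    destruct H3 as [H3|H3].
    - exists w', k. split; auto. split; auto. congruence.
    - exists w', (S k). split; auto. split; auto. rewrite H3, Hv. reflexivity. }
  assert (H0 : P (Sl :: repeat Si (n - 1) ++ [Sr])).
  { exists (repeat Si (n - 1)), 0. split.
    - apply Forall_forall. intros x Hx. apply repeat_spec in Hx. subst. simpl. auto.
    - split; auto. rewrite val_repeat. simpl. lia. }
  set (g := fun x : {s | P s} =>
              constructive_indefinite_description _ (Hnext _ (proj2_sig x))).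
  set (seq := fix seq (k : nat) : {s | P s} :=
           match k with
           | 0 => exist P _ H0
           | S k' => let y := g (seq k') in exist P (proj1_sig y) (proj2 (proj2_sig y))
           end).
  apply T. exists (fun k => proj1_sig (seq k)).
  intros k. simpl. destruct (g (seq k)) as [t [Ht1 Ht2]]. simpl. exact Ht1.
Qed.

Theorem mainTheorem8 : terminating L_srs <-> collatz_conjecture.
Proof. split; [apply dir2|apply dir1]. Qed.
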